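(* Let $A$ be a module over a ring and let $A=\bigoplus_{i\in I}A_i$ be a direct decomposition of $A$. Then the endomorphism ring $\mathrm{End}\,A$ is centrally essential if and only if for every $i\in I$: (1) $A_i$ is a fully invariant submodule of $A$, and (2) the ring $\mathrm{End}\,A_i$ is centrally essential.
   Context: All rings are associative with identity. A ring $R$ is centrally essential if for every non-zero $a\in R$ there exist non-zero elements $x,y$ of the center of $R$ with $ax=y$. A submodule is fully invariant if it is mapped into itself by every endomorphism of $A$. *)

(* Defs.v *)
(* Submodules are
   predicates [A -> Prop]; the endomorphism ring of a submodule B of A is
   represented by maps A -> A that are R-linear on B and map B into B, two such
   maps being equal in End B iff they agree on B.  Ring multiplication in End B
   is composition, zero is the zero map. *)
From HB Require Import structures.
From mathcomp Require Import all_boot all_algebra.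
Set Implicit Arguments. Unset Strict Implicit. Unset Printing Implicit Defensive.
Import GRing.Theory.
Local Open Scope ring_scope.

Section Defs.
Variables (R : pzRingType) (A : lmodType R).

Definition submodule (B : A -> Prop) : Prop :=
  [/\ B 0, (forall x y, B x -> B y -> B (x + y)) & (forall (r : R) x, B x -> B (r *: x))].

Definition endo_of (B : A -> Prop) (f : A -> A) : Prop :=
  [/\ (forall x y, B x -> B y -> f (x + y) = f x + f y),
      (forall (r : R) x, B x -> f (r *: x) = r *: f x)
    & (forall x, B x -> B (f x))].

Definition eq_on (B : A -> Prop) (f g : A -> A) : Prop := forall x, B x -> f x = g x.

Definition central_endo (B : A -> Prop) (c : A -> A) : Prop :=
  endo_of B c /\ forall g, endo_of B g -> eq_on B (c \o g) (g \o c).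

Definition End_centrally_essential (B : A -> Prop) : Prop :=
  forall a, endo_of B a -> ~ eq_on B a (fun _ => 0) ->
    exists x y, [/\ central_endo B x, central_endo B y,
                    ~ eq_on B x (fun _ => 0), ~ eq_on B y (fun _ => 0)
                  & eq_on B (a \o x) y].

Definition fully_invariant (B : A -> Prop) : Prop :=
  forall f, endo_of (fun _ => True) f -> forall x, B x -> B (f x).

Definition direct_decomposition (I : eqType) (Ai : I -> A -> Prop) : Prop :=
  [/\ (forall i, submodule (Ai i)),
      (forall x : A, exists (s : seq I) (f : I -> A),
          (forall i, Ai i (f i)) /\ x = \sum_(i <- s) f i)
    & (forall (s : seq I) (f : I -> A), uniq s -> (forall i, i \in s -> Ai i (f i)) ->
          \sum_(i <- s) f i = 0 -> forall i, i \in s -> f i = 0)].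
End Defs.

(* Main.v *)
Require Import Defs.
From mathcomp Require Import all_boot all_algebra.
From Stdlib Require Import ClassicalEpsilon Classical.
Set Implicit Arguments. Unset Strict Implicit. Unset Printing Implicit Defensive.
Import GRing.Theory.
Local Open Scope ring_scope.

Section Aux.
Variables (R : pzRingType) (A : lmodType R) (I : eqType) (Ai : I -> A -> Prop).
Hypothesis HD : direct_decomposition Ai.

Lemma subi i : submodule (Ai i). Proof. by case: HD. Qed.
Lemma sub0 i : Ai i 0. Proof. by case: (subi i). Qed.
Lemma subD i x y : Ai i x -> Ai i y -> Ai i (x + y). Proof. by case: (subi i) => _ h _; apply: h. Qed.
Lemma subZ i r x : Ai i x -> Ai i (r *: x). Proof. by case: (subi i) => _ _ h; apply: h. Qed.
Lemma subN i x : Ai i x -> Ai i (- x). Proof. by move=> h; rewrite -scaleN1r; apply: subZ. Qed.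
Lemma subsum i (T : Type) (s : seq T) (P : pred T) (F : T -> A) :
  (forall t, P t -> Ai i (F t)) -> Ai i (\sum_(t <- s | P t) F t).
Proof. move=> h; apply: (big_ind (Ai i)) => //; [exact: sub0 | exact: subD]. Qed.

Definition dec (x : A) (s : seq (I * A)) :=
  (forall p, p \in s -> Ai p.1 p.2) /\ x = \sum_(p <- s) p.2.

Lemma dec_ex x : exists s, dec x s.
Proof.
case: HD => _ /(_ x) [s0 [f [hf ->]]] _.
exists (map (fun j => (j, f j)) s0); split; last by rewrite big_map.
by move=> p /mapP [j _ ->].
Qed.

Lemma key s : (forall p, p \in s -> Ai p.1 p.2) -> \sum_(p <- s) p.2 = 0 ->
  forall i, \sum_(p <- s | p.1 == i) p.2 = 0.
Proof.
move=> hs h0 i.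
set t := undup (map fst s).
set f := fun j => \sum_(p <- s | p.1 == j) p.2.
have hf : forall j, Ai j (f j).
  move=> j; rewrite /f big_seq_cond; apply: subsum => p /andP [ps /eqP <-].
  exact: hs.
have hsum : \sum_(j <- t) f j = 0.
  rewrite -[RHS]h0 /f.
  under eq_bigr do rewrite big_mkcond.
  rewrite exchange_big.
  apply: eq_big_seq => p ps /=.
  rewrite -big_mkcond /= -big_filter.
  have -> : [seq j <- t | p.1 == j] = [:: p.1].
    rewrite -(filter_pred1_uniq (undup_uniq (map fst s)) (x := p.1)).
      by apply: eq_filter => j /=; rewrite eq_sym.
    by rewrite mem_undup; apply: map_f.
  by rewrite big_seq1.
case: HD => _ _ /(_ t f (undup_uniq _) (fun j _ => hf j) hsum i) hi.
case it : (i \in t); first by rewrite -/(f i) hi.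
rewrite big_seq_cond big1 // => p /andP [ps /eqP ei].
by move: it; rewrite mem_undup -ei map_f.
Qed.

Definition proj i x := epsilon (inhabits (0 : A))
  (fun y => exists s, dec x s /\ y = \sum_(p <- s | p.1 == i) p.2).

Lemma projE i x s : dec x s -> proj i x = \sum_(p <- s | p.1 == i) p.2.
Proof.
move=> [hs ex].
have [s' [[hs' ex'] ->]] : exists s', dec x s' /\ proj i x = \sum_(p <- s' | p.1 == i) p.2.
  have [s' ds'] := dec_ex x.
  apply: (epsilon_spec (inhabits (0:A)) (fun y => exists s', dec x s' /\ y = \sum_(p <- s' | p.1 == i) p.2)).
  by exists (\sum_(p <- s' | p.1 == i) p.2), s'.
pose u := s' ++ map (fun p => (p.1, - p.2)) s.
have hk : \sum_(p <- u | p.1 == i) p.2 = 0.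
  apply: key; last by rewrite big_cat big_map /= sumrN -ex -ex' subrr.
  move=> p; rewrite mem_cat => /orP [/hs' //| /mapP [q qs ->] /=].
  exact/subN/hs.
by move: hk; rewrite big_cat big_map /= sumrN => /eqP; rewrite subr_eq0 => /eqP.
Qed.


Lemma proj_in i x : Ai i (proj i x).
Proof.
have [s ds] := dec_ex x; rewrite (projE i ds) big_seq_cond.
apply: subsum => p /andP [ps /eqP <-]; case: ds => hs _; exact: hs.
Qed.

Lemma proj_id i z : Ai i z -> proj i z = z.
Proof.
move=> hz; have ds : dec z [:: (i, z)].
  split; last by rewrite big_seq1.
  by move=> p; rewrite inE => /eqP ->.
by rewrite (projE i ds) big_cons big_nil /= eqxx addr0.
Qed.

Lemma projD i x y : proj i (x + y) = proj i x + proj i y.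
Proof.
have [s ds] := dec_ex x; have [t dt] := dec_ex y.
have dst : dec (x + y) (s ++ t).
  case: ds => hs ->; case: dt => ht ->; split; last by rewrite big_cat.
  by move=> p; rewrite mem_cat => /orP [/hs | /ht].
by rewrite (projE i ds) (projE i dt) (projE i dst) big_cat.
Qed.

Lemma projZ i r x : proj i (r *: x) = r *: proj i x.
Proof.
have [s ds] := dec_ex x.
have drs : dec (r *: x) (map (fun p => (p.1, r *: p.2)) s).
  case: ds => hs ->; split; last by rewrite big_map scaler_sumr.
  by move=> p /mapP [q qs ->] /=; apply/subZ/hs.
by rewrite (projE i ds) (projE i drs) big_map /= scaler_sumr.
Qed.

Lemma endo0 (B : A -> Prop) g : endo_of B g -> B 0 -> g 0 = 0.
Proof.
case=> gD _ _ B0; have h := gD 0 0 B0 B0.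
apply: (addrI (g 0)); rewrite -h; by rewrite !addr0.
Qed.

Lemma endo_sum g (T : Type) (s : seq T) (P : pred T) (F : T -> A) :
  endo_of (fun _ => True) g -> g (\sum_(t <- s | P t) F t) = \sum_(t <- s | P t) g (F t).
Proof.
move=> ge; have g0 := endo0 ge Logic.I.
case: ge => gD _ _.
by apply: (big_morph g (fun x y => gD x y Logic.I Logic.I) g0).
Qed.

Lemma proj_endo i : endo_of (fun _ => True) (proj i).
Proof. by split=> // *; [apply: projD | apply: projZ]. Qed.

Lemma proj_comm i g : endo_of (fun _ => True) g ->
  (forall j x, Ai j x -> Ai j (g x)) -> forall x, proj i (g x) = g (proj i x).
Proof.
move=> ge gi x; have [s ds] := dec_ex x.
have dg : dec (g x) (map (fun p => (p.1, g p.2)) s).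
  case: ds => hs ->; split; last by rewrite big_map endo_sum.
  by move=> p /mapP [q qs ->] /=; apply/gi/hs.
by rewrite (projE i ds) (projE i dg) big_map endo_sum.
Qed.

Lemma lift_endo i g : endo_of (Ai i) g -> endo_of (fun _ => True) (g \o proj i).
Proof.
case=> gD gZ _; split=> //= [x y _ _ | r x _].
  by rewrite projD gD //; apply: proj_in.
by rewrite projZ gZ //; apply: proj_in.
Qed.

Lemma restr_endo i g : endo_of (fun _ => True) g -> (forall x, Ai i x -> Ai i (g x)) ->
  endo_of (Ai i) g.
Proof. by case=> gD gZ _ gi; split=> // *; [apply: gD | apply: gZ]. Qed.

End Aux.

Theorem lemma2p1 (R : pzRingType) (A : lmodType R) (I : eqType) (Ai : I -> A -> Prop) :
  direct_decomposition Ai ->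
  (End_centrally_essential (fun _ : A => True) <->
   (forall i, fully_invariant (Ai i) /\ End_centrally_essential (Ai i))).
Proof.
move=> HD; split.
- move=> CE.
  have FI : forall i, fully_invariant (Ai i).
    move=> i a ae x xi.
    pose E := proj Ai i.
    have Ee := proj_endo HD i.
    have EE : forall w, E (E w) = E w by move=> w; apply: proj_id => //; apply: proj_in.
    case: (ae) => aD aZ _.
    pose c := fun w => a (E w) - E (a (E w)).
    have ce : endo_of (fun _ => True) c.
      split=> // [u v _ _ | r u _]; rewrite /c /E.
        rewrite !(projD HD) aD // (projD HD); by rewrite opprD addrACA.
      by rewrite !(projZ HD) aZ // (projZ HD) scalerBr.
    have Ec : forall w, E (c w) = 0.
      by move=> w; rewrite /c /E (projD HD) -scaleN1r (projZ HD) scaleN1r -/E EE subrr.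
    have cE : forall w, c (E w) = c w by move=> w; rewrite /c EE.
    have c0 : eq_on (fun _ => True) c (fun _ => 0).
      apply: NNPP => cn.
      have [x' [y' [[x'e x'c] [y'e y'c] _ yn cxy]]] := CE c ce cn.
      apply: yn => w _.
      have h1 : y' w = y' (E w).
        rewrite -!cxy //= -cE.
        have := x'c E Ee w Logic.I; rewrite /= => ->; done.
      rewrite h1.
      have := y'c E Ee w Logic.I; rewrite /= => ->.
      by rewrite -cxy //= Ec.
    have := c0 x Logic.I; rewrite /c /E (proj_id HD) // => /eqP; rewrite subr_eq0 => /eqP ->.
    exact: proj_in.
  move=> i; split; first exact: FI.
  move=> a ae an.
  have Ee := proj_endo HD i.
  have Ein : forall w, Ai i ((proj Ai i) w) by move=> w; apply: proj_in.
  have EE : forall w, (proj Ai i) ((proj Ai i) w) = (proj Ai i) w by move=> w; apply: proj_id.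
  have ahe := lift_endo HD ae.
  have ahn : ~ eq_on (fun _ => True) (a \o proj Ai i) (fun _ => 0).
    move=> h; apply: an => w wi; have := h w Logic.I; by rewrite /= proj_id.
  have [x [y [[xe xc] [ye yc] xn yn axy]]] := CE _ ahe ahn.
  have xi : forall w, Ai i w -> Ai i (x w) by move=> w wi; apply: (FI i x xe).
  have xE : forall w, x ((proj Ai i) w) = (proj Ai i) (x w) by move=> w; have := xc (proj Ai i) Ee w Logic.I.
  have a0 : a 0 = 0 by apply: (endo0 ae); apply: sub0.
  have ynz : ~ eq_on (Ai i) y (fun _ => 0).
    move=> h; apply: yn => w _.
    have -> : y w = y ((proj Ai i) w).
      by rewrite -!axy //= xE EE.
    exact: h.
  exists x, y; split => //.
  + split; first exact: restr_endo.
    move=> g ge w wi /=.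
    have := xc _ (lift_endo HD ge) w Logic.I; rewrite /= .
    by rewrite proj_id // proj_id //; apply: xi.
  + split; first by apply: restr_endo => // w wi; apply: (FI i y ye).
    move=> g ge w wi /=.
    have := yc _ (lift_endo HD ge) w Logic.I; rewrite /= .
    by rewrite proj_id // proj_id //; apply: (FI i y ye).
  + move=> h; apply: ynz => w wi.
    rewrite -axy //= (proj_id HD); last exact: xi.
    by rewrite h // a0.
  + move=> w wi /=; rewrite -axy //= proj_id //; exact: xi.
- move=> H a ae an.
  have [[i [w [wi aw]]] | nex] := classic (exists i w, Ai i w /\ a w <> 0); last first.
    exfalso; apply: an => z _.
    have [s [hs ->]] := dec_ex HD z.
    rewrite endo_sum // big_seq big1 // => p ps.
    apply: NNPP => ne; apply: nex; exists p.1, p.2; split => //; exact: hs.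
  have [FIi CEi] := H i.
  have FIall : forall j x, Ai j x -> forall g, endo_of (fun _ => True) g -> Ai j (g x).
    by move=> j x xj g ge; apply: (proj1 (H j) g ge).
  have aie : endo_of (Ai i) a by apply: restr_endo => // x xi; apply: FIi.
  have ain : ~ eq_on (Ai i) a (fun _ => 0) by move=> h; apply: aw; apply: h.
  have [x [y [[xe xc] [ye yc] xn yn axy]]] := CEi a aie ain.
  exists (x \o proj Ai i), (y \o proj Ai i).
  have cent : forall z, central_endo (Ai i) z -> central_endo (fun _ => True) (z \o proj Ai i).
    move=> z [ze zc]; split; first exact: lift_endo.
    move=> g ge u _ /=.
    rewrite (@proj_comm _ _ _ _ HD i g ge) //; last by move=> j v vj; apply: FIall.
    apply: zc; last by apply: proj_in.
    by apply: restr_endo => // v vi; apply: FIall.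
  split.
  + exact: cent.
  + exact: cent.
  + move=> h; apply: xn => u ui; have := h u Logic.I; by rewrite /= proj_id.
  + move=> h; apply: yn => u ui; have := h u Logic.I; by rewrite /= proj_id.
  + move=> u _ /=; apply: axy; exact: proj_in.
Qed.
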